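(* Let $W$ be an sc-Banach space and let $g:\mathcal O(([0,\infty)^k\oplus\mathbb R^{n-k})\oplus W,0)\to\mathbb R^N\oplus W$ be an sc-smooth germ such that, with $P:\mathbb R^N\oplus W\to W$ the canonical projection, the germ $P\circ(g-g(0,0)):\mathcal O(([0,\infty)^k\oplus\mathbb R^{n-k})\oplus W,0)\to W$ is an $\mathrm{sc}^0$-contraction germ. Then $g$ is linearized Fredholm at $0$ and its Fredholm index is $\operatorname{Ind}(g,0)=n-N$.
   Context: An sc-Banach space is a Banach space $E$ with a nested sequence of Banach spaces $E=E_0\supset E_1\supset\cdots$, the inclusions $E_n\to E_m$ ($m<n$) compact and $E_\infty=\bigcap E_m$ dense in each $E_m$; finite-dimensional spaces carry the constant structure, direct sums the levelwise one; $F^1$ denotes $F_1$ with levels $(F^1)_m=F_{m+1}$. A germ of neighborhoods $\mathcal O(C,0)$ is a decreasing sequence $U_0\supset U_1\supset\cdots$ with $U_m$ relatively open neighborhood of $0$ in $C\cap E_m$. An $\mathrm{sc}^0$-germ $g:\mathcal O(C,0)\to F$ is a continuous $g:U_0\to F_0$ with $g(U_m)\subset F_m$ and $g:U_m\to F_m$ continuous for all $m$ (an ''$\mathrm{sc}^0$-germ into $(F,0)$'' additionally has $g(0)=0$). It is $\mathrm{sc}^1$ if for $x\in U_1$ there is $Dg(x)\in\mathcal L(E_0,F_0)$ with $\|g(x+h)-g(x)-Dg(x)h\|_0/\|h\|_1\to0$ as $\|h\|_1\to0$ and $Tg(x,h)=(g(x),Dg(x)h)$ maps $U_{m+1}\oplus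 E_m$ into $F_{m+1}\oplus F_m$ and is an $\mathrm{sc}^0$-germ; $\mathrm{sc}^k$ inductively ($Tg$ of class $\mathrm{sc}^{k-1}$); sc-smooth means $\mathrm{sc}^k$ for all $k$ (then $g(0)\in F_\infty$). An $\mathrm{sc}^+$-germ is an $\mathrm{sc}$-smooth germ $s$ with $s(U_m)\subset F_{m+1}$ which is sc-smooth as a germ into $F^1$. An sc-operator is a bounded linear $T:E\to F$ mapping $E_m$ continuously into $F_m$ for all $m$. It is sc-Fredholm if there are levelwise topological splittings $E=K\oplus X$, $F=Y\oplus C$ into closed subspaces compatible with all levels such that $K=\ker T$ and $C$ are finite-dimensional, $Y=T(X)$ and $T:X\to Y$ is an sc-isomorphism; its index is $\dim K-\dim C$. The germ $g$ is linearized Fredholm at $0$ if for an $\mathrm{sc}^+$-germ $s$ with $s(0)=g(0)$ the linearization $D(g-s)(0)$ is an sc-Fredholm operator; its index $\operatorname{Ind}(g,0)$ is the Fredholm index of $D(g-s)(0)$ (this does not depend on the choice of $s$). An $\mathrm{sc}^0$-contraction germ is an $\mathrm{sc}^0$-germ $f:\mathcal O(V\oplus W,0)\to(W,0)$, $V$ a finite-dimensional partial quadrant, of the form $f(v,w)=w-B(v,w)$ with: for every $m$ and $0<\varepsilon<1$, $\|B(v,w)-B(v,w')\|_m\le\varepsilon\|w-w'\|_m$ for $(v,w),(v,w')$ sufficiently close to $(0,0)$ in $V\oplus W_m$. *)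

(* Defs.v *)
From mathcomp Require Import all_boot all_order all_algebra reals Rstruct.
Set Implicit Arguments. Unset Strict Implicit. Unset Printing Implicit Defensive.
Import Order.TTheory GRing.Theory Num.Theory.
Local Open Scope ring_scope.

Notation R := Rdefinitions.R.

Record scSpace (V : lmodType R) := ScSpace {
  lvl : nat -> V -> Prop;
  nrm : nat -> V -> R }.

Section ScDefs.
Variables (V V' : lmodType R).

Definition is_subspace (A : V -> Prop) : Prop :=
  A 0 /\ (forall a x y, A x -> A y -> A (a *: x + y)).

Definition is_norm_on (A : V -> Prop) (N : V -> R) : Prop :=
  (forall x, A x -> 0 <= N x) /\
  (forall x, A x -> N x = 0 -> x = 0) /\
  (forall a x, A x -> N (a *: x) = `|a| * N x) /\
  (forall x y, A x -> A y -> N (x + y) <= N x + N y).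

Definition cauchy_in (N : V -> R) (u : nat -> V) : Prop :=
  forall e : R, 0 < e -> exists i0, forall i j, (i0 <= i)%N -> (i0 <= j)%N ->
    N (u i - u j) < e.

Definition converges_to (N : V -> R) (u : nat -> V) (x : V) : Prop :=
  forall e : R, 0 < e -> exists i0, forall i, (i0 <= i)%N -> N (u i - x) < e.

Definition is_scBanach (E : scSpace V) : Prop :=
  (forall m, is_subspace (lvl E m)) /\
  (forall m, is_norm_on (lvl E m) (nrm E m)) /\
  (forall m x, lvl E m.+1 x -> lvl E m x) /\
  (forall m (u : nat -> V), (forall i, lvl E m (u i)) -> cauchy_in (nrm E m) u ->
     exists x, lvl E m x /\ converges_to (nrm E m) u x) /\
  (forall m n, (m < n)%N -> forall u : nat -> V,
     (forall i, lvl E n (u i) /\ nrm E n (u i) <= 1) ->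
     exists (phi : nat -> nat) (x : V),
       (forall i, (phi i < phi i.+1)%N) /\ lvl E m x /\
       converges_to (nrm E m) (u \o phi) x) /\
  (forall m x, lvl E m x -> forall e : R, 0 < e ->
     exists y, (forall j, lvl E j y) /\ nrm E m (x - y) < e).

Definition closed_in (E : scSpace V) (m : nat) (A : V -> Prop) : Prop :=
  forall (u : nat -> V) x, (forall i, A (u i)) -> lvl E m x ->
    converges_to (nrm E m) u x -> A x.

Definition has_dim (A : V -> Prop) (d : nat) : Prop :=
  exists b : 'I_d -> V,
    (forall x, A x <-> exists c : 'I_d -> R, x = \sum_(i < d) c i *: b i) /\
    (forall c : 'I_d -> R, \sum_(i < d) c i *: b i = 0 -> forall i, c i = 0).

Definition is_germ_nbhd (E : scSpace V) (C : V -> Prop) (U : nat -> V -> Prop)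
  : Prop :=
  (forall m x, U m.+1 x -> U m x) /\
  (forall m x, U m x -> C x /\ lvl E m x) /\
  (forall m, U m 0) /\
  (forall m x, U m x -> exists d : R, 0 < d /\
     forall y, C y -> lvl E m y -> nrm E m (y - x) < d -> U m y).

Definition sc0 (E : scSpace V) (F : scSpace V') (U : nat -> V -> Prop)
  (g : V -> V') : Prop :=
  (forall m x, U m x -> lvl F m (g x)) /\
  (forall m x, U m x -> forall e : R, 0 < e -> exists d : R, 0 < d /\
     forall y, U m y -> nrm E m (y - x) < d -> nrm F m (g y - g x) < e).

Definition bounded_linear0 (E : scSpace V) (F : scSpace V') (L : V -> V') : Prop :=
  (forall x, lvl E 0 x -> lvl F 0 (L x)) /\
  (forall a x y, lvl E 0 x -> lvl E 0 y -> L (a *: x + y) = a *: L x + L y) /\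
  (exists c : R, forall x, lvl E 0 x -> nrm F 0 (L x) <= c * nrm E 0 x).

Definition is_scderiv (E : scSpace V) (F : scSpace V') (U : nat -> V -> Prop)
  (g : V -> V') (x : V) (L : V -> V') : Prop :=
  bounded_linear0 E F L /\
  forall e : R, 0 < e -> exists d : R, 0 < d /\
    forall h, lvl E 1 h -> U 1 (x + h) -> nrm E 1 h < d ->
      nrm F 0 (g (x + h) - g x - L h) <= e * nrm E 1 h.

Definition sc_operator (E : scSpace V) (F : scSpace V') (T : V -> V') : Prop :=
  (forall a x y, lvl E 0 x -> lvl E 0 y -> T (a *: x + y) = a *: T x + T y) /\
  (forall m x, lvl E m x -> lvl F m (T x)) /\
  (forall m, exists c : R, forall x, lvl E m x -> nrm F m (T x) <= c * nrm E m x).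

End ScDefs.

Definition sc_splitting (V : lmodType R) (E : scSpace V) (A B : V -> Prop) : Prop :=
  is_subspace A /\ is_subspace B /\
  (forall x, A x -> lvl E 0 x) /\ (forall x, B x -> lvl E 0 x) /\
  closed_in E 0 A /\ closed_in E 0 B /\
  (forall x, A x -> B x -> x = 0) /\
  (forall m x, lvl E m x -> exists a b, A a /\ B b /\ lvl E m a /\ lvl E m b /\
     x = a + b) /\
  (forall m, exists c : R, forall a b, A a -> B b -> lvl E m a -> lvl E m b ->
     nrm E m a <= c * nrm E m (a + b)).

Definition sc_fredholm (V V' : lmodType R) (E : scSpace V) (F : scSpace V')
  (T : V -> V') (dK dC : nat) : Prop :=
  sc_operator E F T /\
  exists (K X : V -> Prop) (Y Cc : V' -> Prop),
    (forall x, K x <-> lvl E 0 x /\ T x = 0) /\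
    has_dim K dK /\ has_dim Cc dC /\
    sc_splitting E K X /\ sc_splitting F Y Cc /\
    (forall y, Y y <-> exists x, X x /\ y = T x) /\
    (forall x x', X x -> X x' -> T x = T x' -> x = x') /\
    (forall m y, Y y -> lvl F m y -> exists x, X x /\ lvl E m x /\ T x = y) /\
    (forall m, exists c : R, forall x, X x -> lvl E m x ->
       nrm E m x <= c * nrm F m (T x)).

Definition sc_shift (V : lmodType R) (E : scSpace V) : scSpace V :=
  ScSpace (fun m => lvl E m.+1) (fun m => nrm E m.+1).

Definition sc_sum (V W : lmodType R) (E : scSpace V) (F : scSpace W)
  : scSpace (V * W)%type :=
  ScSpace (fun m p => lvl E m p.1 /\ lvl F m p.2)
          (fun m p => nrm E m p.1 + nrm F m p.2).

Definition sc_fin (n : nat) : scSpace 'rV[R]_n :=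
  @ScSpace _ (fun _ _ => True) (fun _ (v : 'rV[R]_n) => \sum_(i < n) `|v ord0 i|).

Definition tan_space (V : lmodType R) (E : scSpace V) : scSpace (V * V)%type :=
  sc_sum (sc_shift E) E.
Definition tan_germ (V : lmodType R) (E : scSpace V) (U : nat -> V -> Prop)
  : nat -> (V * V)%type -> Prop :=
  fun m p => U m.+1 p.1 /\ lvl E m p.2.
Definition tan_map (V V' : lmodType R) (g : V -> V') (L : V -> V -> V')
  : (V * V)%type -> (V' * V')%type :=
  fun p => (g p.1, L p.1 p.2).

Fixpoint scK (k : nat) : forall (V V' : lmodType R), scSpace V -> scSpace V' ->
    (nat -> V -> Prop) -> (V -> V') -> Prop :=
  match k with
  | 0 => fun V V' E F U g => sc0 E F U g
  | k'.+1 => fun V V' E F U g =>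
      sc0 E F U g /\
      exists L : V -> V -> V',
        (forall x, U 1%N x -> is_scderiv E F U g x (L x)) /\
        scK k' (tan_space E) (tan_space F) (tan_germ E U) (tan_map g L)
  end.

Definition sc_smooth (V V' : lmodType R) (E : scSpace V) (F : scSpace V')
  (U : nat -> V -> Prop) (g : V -> V') : Prop :=
  forall k, scK k E F U g.

Definition sc_plus (V V' : lmodType R) (E : scSpace V) (F : scSpace V')
  (U : nat -> V -> Prop) (s : V -> V') : Prop :=
  sc_smooth E F U s /\ (forall m x, U m x -> lvl F m.+1 (s x)) /\
  sc_smooth E (sc_shift F) U s.

Definition quadrant (k n : nat) : 'rV[R]_n -> Prop :=
  fun v => forall i : 'I_n, (i < k)%N -> 0 <= v ord0 i.

Definition sc0_contraction (n : nat) (W : lmodType R) (EW : scSpace W)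
  (U : nat -> ('rV[R]_n * W)%type -> Prop) (f : ('rV[R]_n * W)%type -> W) : Prop :=
  sc0 (sc_sum (sc_fin n) EW) EW U f /\ f 0 = 0 /\
  let B := fun p : ('rV[R]_n * W)%type => p.2 - f p in
  forall m (e : R), 0 < e < 1 -> exists d : R, 0 < d /\
    forall v w w', U m (v, w) -> U m (v, w') ->
      nrm (sc_fin n) 0 v < d -> nrm EW m w < d -> nrm EW m w' < d ->
      nrm EW m (B (v, w) - B (v, w')) <= e * nrm EW m (w - w').

Definition lin_fredholm_index (V V' : lmodType R) (E : scSpace V) (F : scSpace V')
  (C : V -> Prop) (U : nat -> V -> Prop) (g : V -> V') (i : int) : Prop :=
  exists (Us : nat -> V -> Prop) (s : V -> V'),
    is_germ_nbhd E C Us /\ sc_plus E F Us s /\ s 0 = g 0 /\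
    let U' := fun m x => U m x /\ Us m x in
    (exists L, is_scderiv E F U' (fun x => g x - s x) 0 L) /\
    (forall L, is_scderiv E F U' (fun x => g x - s x) 0 L ->
       exists dK dC : nat, sc_fredholm E F L dK dC /\ (dK%:Z - dC%:Z = i)).

(* Main.v *)
Require Import Defs.
From mathcomp Require Import all_boot all_order all_algebra reals Rstruct.
From mathcomp Require Import ring lra.
Import Order.TTheory GRing.Theory Num.Theory.
Set Implicit Arguments. Unset Strict Implicit. Unset Printing Implicit Defensive.
Local Open Scope ring_scope.

Definition good (V : lmodType R) (E : scSpace V) : Prop :=
  (forall m, lvl E m 0) /\ (forall m x, lvl E m.+1 x -> lvl E m x) /\
  (forall m a x y, lvl E m x -> lvl E m y -> lvl E m (a *: x + y)) /\
  (forall m x, lvl E m x -> 0 <= nrm E m x) /\ (forall m, nrm E m 0 = 0).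

Lemma good_tan (V : lmodType R) (E : scSpace V) : good E -> good (tan_space E).
Proof.
move=> [h0 [hS [hL [hN hZ]]]]; split; first by move=> m; split => /=.
split; first by move=> m x [? ?]; split; apply: hS.
split; first by move=> m a x y [? ?] [? ?]; split; apply: hL.
split; first by move=> m x [? ?]; apply: addr_ge0; [apply: hN|apply: hN].
by move=> m /=; rewrite !hZ addr0.
Qed.

Lemma good_shift (V : lmodType R) (E : scSpace V) : good E -> good (sc_shift E).
Proof.
move=> [h0 [hS [hL [hN hZ]]]]; split; first by move=> m; apply: h0.
split; first by move=> m x; apply: hS.
split; first by move=> m a x y; apply: hL.
split; first by move=> m x; apply: hN.
by move=> m; apply: hZ.
Qed.

Lemma good_lvl0 (V : lmodType R) (E : scSpace V) m x : good E -> lvl E m x -> lvl E 0 x.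
Proof.
move=> [_ [hS _]]; elim: m => [//|m IH] /hS; exact: IH.
Qed.

Lemma lvl_mono (V : lmodType R) (E : scSpace V) m j x : good E -> (j <= m)%N -> lvl E m x -> lvl E j x.
Proof.
move=> [_ [hS _]]; elim: m => [|m IH]; first by rewrite leqn0 => /eqP->.
rewrite leq_eqVlt => /orP[/eqP->//|]; rewrite ltnS => hj /hS; exact: IH.
Qed.

Lemma small_lt (b N d e : R) : 0 < e -> 0 <= N -> d = e / (`|b| + 1) -> N < d -> b * N < e.
Proof.
move=> he hN -> hNd.
have hB : 0 <= `|b| by [].
have hbb : b <= `|b| by apply: ler_norm.
have hp : 0 < `|b| + 1 by lra.
have : N * (`|b| + 1) < e by rewrite -ltr_pdivlMr.
move: hB hbb; set B := `|b| => hB hbb h.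
nra.
Qed.

Lemma affine_scK k : forall (V V' : lmodType R) (E : scSpace V) (F : scSpace V')
  (U : nat -> V -> Prop) (f : V -> V') (c : V') (T : V -> V'),
  good E -> good F -> (forall m, lvl F m c) -> (forall m x, U m x -> lvl E m x) ->
  (forall m x, lvl E m x -> lvl F m (T x)) ->
  (forall a x y, lvl E 0 x -> lvl E 0 y -> T (a *: x + y) = a *: T x + T y) ->
  (forall m, exists b, forall x, lvl E m x -> nrm F m (T x) <= b * nrm E m x) ->
  (forall x, f x = c + T x) -> scK k E F U f.
Proof.
have sc0P : forall (V V' : lmodType R) (E : scSpace V) (F : scSpace V')
  (U : nat -> V -> Prop) (f : V -> V') (c : V') (T : V -> V'),
  good E -> good F -> (forall m, lvl F m c) -> (forall m x, U m x -> lvl E m x) ->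
  (forall m x, lvl E m x -> lvl F m (T x)) ->
  (forall a x y, lvl E 0 x -> lvl E 0 y -> T (a *: x + y) = a *: T x + T y) ->
  (forall m, exists b, forall x, lvl E m x -> nrm F m (T x) <= b * nrm E m x) ->
  (forall x, f x = c + T x) -> sc0 E F U f.
  move=> V V' E F U f c T gE gF hc hU hT hlin hb hf.
  have gE' := gE; have gF' := gF.
  move: gE' gF' => [e0 [eS [eL [eN eZ]]]] [f0 [fS [fL [fN fZ]]]].
  split.
    move=> m x /hU hx; rewrite hf -[c]scale1r; apply: fL => //; exact: hT.
  move=> m x Ux e he; have [b hbm] := hb m.
  exists (e / (`|b| + 1)); split; first by apply: divr_gt0 => //; apply: ltr_pwDr.
  move=> y Uy hyx.
  have hx := hU _ _ Ux; have hy := hU _ _ Uy.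
  have hyx0 : lvl E m (y - x) by rewrite addrC -scaleN1r; apply: eL.
  have -> : f y - f x = T (y - x).
    have -> : y - x = (-1) *: x + y by rewrite scaleN1r addrC.
    rewrite !hf hlin; last 2 first.
      exact: (good_lvl0 gE hx). exact: (good_lvl0 gE hy).
    rewrite scaleN1r opprD addrA.
    by rewrite (addrAC c) subrr add0r addrC.
  apply: (le_lt_trans (hbm _ hyx0)); apply: (small_lt he (eN _ _ hyx0) erefl hyx).
elim: k => [|k IH] V V' E F U f c T gE gF hc hU hT hlin hb hf; first exact: (sc0P _ _ _ _ _ _ _ T).
split; first exact: (sc0P _ _ _ _ _ _ _ T).
have gE' := gE; have gF' := gF.
move: gE' gF' => [e0 [eS [eL [eN eZ]]]] [f0 [fS [fL [fN fZ]]]].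
exists (fun _ => T); split.
  move=> x Ux; split.
    split; first by move=> x0; apply: hT.
    split; first exact: hlin.
    by have [b hb0] := hb 0%N; exists b.
  move=> e he; exists 1; split => // h hh _ _.
  have hx : lvl E 0 x by apply: (good_lvl0 gE); apply: hU Ux.
  have hh0 : lvl E 0 h by apply: (good_lvl0 gE) hh.
  have -> : f (x + h) - f x - T h = 0.
    have -> : x + h = 1 *: x + h by rewrite scale1r.
    rewrite !hf hlin // scale1r.
    by rewrite addrA (addrAC (c + T x)) subrr add0r subrr.
  by rewrite fZ; apply: mulr_ge0; [lra| apply: eN].
apply: (IH _ _ _ _ _ _ (c, 0) (fun p => (T p.1, T p.2))).
- exact: good_tan.
- exact: good_tan.
- by move=> m; rewrite /tan_space /sc_sum /=; split.
- by move=> m x [/hU ? ?]; rewrite /tan_space /sc_sum /=; split.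
- by move=> m x [? ?]; rewrite /tan_space /sc_sum /=; split; apply: hT.
- move=> a x y [hx1 hx2] [hy1 hy2] /=.
  have hx0 := good_lvl0 gE hx1; have hy0 := good_lvl0 gE hy1.
  change ((T (a *: x.1 + y.1), T (a *: x.2 + y.2)) = (a *: T x.1 + T y.1, a *: T x.2 + T y.2)).
  by rewrite !hlin.
- move=> m; have [b1 hb1] := hb m.+1; have [b2 hb2] := hb m.
  exists (`|b1| + `|b2|) => x [hx1 hx2] /=.
  have := hb1 _ hx1; have := hb2 _ hx2.
  have := eN _ _ hx1; have := eN _ _ hx2.
  have := ler_norm b1; have := ler_norm b2.
  have : 0 <= `|b1| by []. have : 0 <= `|b2| by [].
  set B1 := `|b1|; set B2 := `|b2|; set N1 := nrm E m.+1 x.1; set N2 := nrm E m x.2.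
  set M1 := nrm F m.+1 (T x.1); set M2 := nrm F m (T x.2).
  move=> *; nra.
- move=> p; rewrite /tan_map hf.
  change ((c + T p.1, T p.2) = (c + T p.1, 0 + T p.2)); by rewrite add0r.
Qed.

Definition fn (p : nat) (v : 'rV[R]_p) : R := \sum_(i < p) `|v ord0 i|.

Lemma fn_ge0 p (v : 'rV[R]_p) : 0 <= fn v.
Proof. by apply: sumr_ge0 => i _. Qed.

Lemma fn0 p : fn (0 : 'rV[R]_p) = 0.
Proof. by rewrite /fn big1 // => i _; rewrite mxE normr0. Qed.

Lemma fn_eq0 p (v : 'rV[R]_p) : fn v = 0 -> v = 0.
Proof.
move=> h; apply/matrixP => i j; rewrite mxE [i]ord1.
have := psumr_eq0P (fun i _ => normr_ge0 (v ord0 i)) h (i:=j) isT.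
by move/eqP; rewrite normr_eq0 => /eqP.
Qed.

Lemma fnZ p a (v : 'rV[R]_p) : fn (a *: v) = `|a| * fn v.
Proof. by rewrite /fn mulr_sumr; apply: eq_bigr => i _; rewrite mxE normrM. Qed.

Lemma fnD p (v w : 'rV[R]_p) : fn (v + w) <= fn v + fn w.
Proof.
rewrite /fn -big_split /=; apply: ler_sum => i _; rewrite mxE; exact: ler_normD.
Qed.

Lemma fnN p (v : 'rV[R]_p) : fn (- v) = fn v.
Proof. by rewrite /fn; apply: eq_bigr => i _; rewrite mxE normrN. Qed.

Lemma fn_coord p (v : 'rV[R]_p) i : `|v ord0 i| <= fn v.
Proof.
rewrite /fn (bigD1 i) //= lerDl; by apply: sumr_ge0.
Qed.

Definition FS (W : lmodType R) (EW : scSpace W) (p : nat) := sc_sum (sc_fin p) EW.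

Lemma nrmFS W (EW : scSpace W) p m (x : ('rV[R]_p * W)%type) :
  nrm (sc_sum (sc_fin p) EW) m x = fn x.1 + nrm EW m x.2.
Proof. by []. Qed.

Lemma lvlFS W (EW : scSpace W) p m (x : ('rV[R]_p * W)%type) :
  lvl (sc_sum (sc_fin p) EW) m x <-> lvl EW m x.2.
Proof. by split => [[]|]. Qed.

Lemma good_EW W (EW : scSpace W) : is_scBanach EW -> good EW.
Proof.
move=> [hsub [hnorm [hnest _]]].
have nz : forall m, nrm EW m 0 = 0.
  move=> m; have [h1 [_ [h3 _]]] := hnorm m.
  have h0 := (hsub m).1.
  by rewrite -[0 in LHS](scale0r 0) h3 // normr0 mul0r.
split; first by move=> m; exact: (hsub m).1.
split; first exact: hnest.
split; first by move=> m; exact: (hsub m).2.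
split => // m x; exact: (hnorm m).1.
Qed.

Lemma good_FS W (EW : scSpace W) p : is_scBanach EW -> good (sc_sum (sc_fin p) EW).
Proof.
move=> /good_EW [e0 [eS [eL [eN eZ]]]].
split; first by move=> m; split.
split; first by move=> m x [_ ?]; split => //; apply: eS.
split; first by move=> m a x y [_ ?] [_ ?]; split => //; apply: eL.
split; first by move=> m x [_ ?]; rewrite nrmFS; apply: addr_ge0; [exact: fn_ge0|exact: eN].
by move=> m; rewrite nrmFS fn0 eZ addr0.
Qed.

Lemma EW_eq0 W (EW : scSpace W) m w : is_scBanach EW -> lvl EW m w -> nrm EW m w = 0 -> w = 0.
Proof. move=> [_ [hnorm _]] hw; exact: (hnorm m).2.1. Qed.

Lemma EW_Z W (EW : scSpace W) m a w : is_scBanach EW -> lvl EW m w -> nrm EW m (a *: w) = `|a| * nrm EW m w.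
Proof. move=> [_ [hnorm _]] hw; exact: (hnorm m).2.2.1. Qed.

Lemma EW_D W (EW : scSpace W) m w w' : is_scBanach EW -> lvl EW m w -> lvl EW m w' ->
  nrm EW m (w + w') <= nrm EW m w + nrm EW m w'.
Proof. move=> [_ [hnorm _]] hw hw'; exact: (hnorm m).2.2.2. Qed.

Lemma FS_eq0 W (EW : scSpace W) p m (x : ('rV[R]_p * W)%type) : is_scBanach EW ->
  lvl EW m x.2 -> nrm (sc_sum (sc_fin p) EW) m x = 0 -> x = 0.
Proof.
move=> hB hx; rewrite nrmFS => h.
have /good_EW [_ [_ [_ [eN _]]]] := hB.
have h1 := fn_ge0 x.1; have h2 := eN _ _ hx.
have e1 : fn x.1 = 0 by lra.
have e2 : nrm EW m x.2 = 0 by lra.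
case: x hx e1 e2 {h h1 h2} => v w /= hw /fn_eq0 -> /(EW_eq0 hB hw) -> //.
Qed.

Lemma FS_Z W (EW : scSpace W) p m a (x : ('rV[R]_p * W)%type) : is_scBanach EW ->
  lvl EW m x.2 -> nrm (sc_sum (sc_fin p) EW) m (a *: x) = `|a| * nrm (sc_sum (sc_fin p) EW) m x.
Proof.
move=> hB hx; rewrite !nrmFS mulrDr -fnZ -(EW_Z _ hB hx) //.
Qed.

Lemma FS_D W (EW : scSpace W) p m (x y : ('rV[R]_p * W)%type) : is_scBanach EW ->
  lvl EW m x.2 -> lvl EW m y.2 ->
  nrm (sc_sum (sc_fin p) EW) m (x + y) <= nrm (sc_sum (sc_fin p) EW) m x + nrm (sc_sum (sc_fin p) EW) m y.
Proof.
move=> hB hx hy; rewrite !nrmFS.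
have := fnD x.1 y.1; have := EW_D hB hx hy.
change ((x + y).1) with (x.1 + y.1); change ((x + y).2) with (x.2 + y.2).
lra.
Qed.

Lemma le0_small (X K : R) : 0 <= K -> (forall r, 0 < r -> r < 1 -> X <= r * K) -> X <= 0.
Proof.
move=> hK h; rewrite leNgt; apply/negP => hX.
have hp : 0 < 2 * (K + X + 1) by lra.
set r := X / (2 * (K + X + 1)).
have hd : r * (2 * (K + X + 1)) = X by rewrite /r mulfVK //; apply: lt0r_neq0.
have hr0 : 0 < r by rewrite /r divr_gt0.
have hr1 : r < 1.
  rewrite ltNge; apply/negP => hr; nra.
have := h r hr0 hr1; nra.
Qed.

Lemma le0_small2 (X K : R) : (forall d, 0 < d -> X <= K * d) -> X <= 0.
Proof.
move=> h; rewrite leNgt; apply/negP => hX.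
have hp : 0 < 2 * (`|K| + 1) by have := normr_ge0 K; lra.
have := h (X / (2 * (`|K| + 1))); rewrite divr_gt0 // => /(_ isT).
have hk := ler_norm K; have hk0 := normr_ge0 K.
set d := X / _.
have hd : d * (2 * (`|K| + 1)) = X by rewrite /d mulfVK //; apply: lt0r_neq0.
have hd0 : 0 < d by rewrite /d divr_gt0.
move: hd hd0 hk hk0; set B := `|K| => *; nra.
Qed.

Lemma lin0 (V V' : lmodType R) (E : scSpace V) (T : V -> V') : good E ->
  (forall a x y, lvl E 0 x -> lvl E 0 y -> T (a *: x + y) = a *: T x + T y) -> T 0 = 0.
Proof.
move=> [e0 _] hl; have := hl 1 0 0 (e0 0%N) (e0 0%N).
rewrite !scale1r !addr0 => h; have := congr1 (fun z => z - T 0) h.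
by rewrite subrr addrK => ->.
Qed.

Lemma linZ (V V' : lmodType R) (E : scSpace V) (T : V -> V') a x : good E ->
  (forall a x y, lvl E 0 x -> lvl E 0 y -> T (a *: x + y) = a *: T x + T y) ->
  lvl E 0 x -> T (a *: x) = a *: T x.
Proof.
move=> gE hl hx; have [e0 _] := gE.
by have := hl a x 0 hx (e0 0%N); rewrite !addr0 (lin0 gE hl) addr0.
Qed.

Lemma Lbound (V V' : lmodType R) (E : scSpace V) (F : scSpace V') (U : nat -> V -> Prop)
  (g : V -> V') (L : V -> V -> V') :
  good E -> good F -> (forall m, U m 0) ->
  (forall a x y, lvl E 0 x -> lvl E 0 y -> L 0 (a *: x + y) = a *: L 0 x + L 0 y) ->
  (forall m x, lvl E m x -> nrm E m x = 0 -> x = 0) ->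
  (forall m (a : R) y, lvl F m y -> nrm F m (a *: y) = `|a| * nrm F m y) ->
  (forall m (a : R) x, lvl E m x -> nrm E m (a *: x) = `|a| * nrm E m x) ->
  sc0 (tan_space E) (tan_space F) (tan_germ E U) (tan_map g L) ->
  forall m, (forall x, lvl E m x -> lvl F m (L 0 x)) /\
    exists c, forall x, lvl E m x -> nrm F m (L 0 x) <= c * nrm E m x.
Proof.
move=> gE gF hU hl hdef hFZ hEZ [h1 h2] m.
have gE' := gE; have gF' := gF.
move: gE' gF' => [e0 [eS [eL [eN eZ]]]] [f0 [fS [fL [fN fZ]]]].
have hlv : forall x, lvl E m x -> lvl F m (L 0 x).
  by move=> x hx; have [] := h1 m (0, x) (conj (hU m.+1) hx).
split => //.
have [d [hd hdd]] := h2 m (0, 0) (conj (hU m.+1) (e0 m)) 1 ltr01.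
exists (2 / d) => x hx.
have L00 : L 0 0 = 0 := lin0 gE hl.
have [hN0|hNp] := eqVneq (nrm E m x) 0.
  by rewrite (hdef _ _ hx hN0) L00 fZ eZ mulr0.
have hNpos : 0 < nrm E m x by rewrite lt0r hNp eN.
set t := d / (2 * nrm E m x).
have ht : 0 < t by rewrite /t divr_gt0 // mulr_gt0.
have htx : lvl E m (t *: x) by rewrite -[t *: x]addr0; apply: eL.
have := hdd (0, t *: x) (conj (hU m.+1) htx).
rewrite /tan_map /=.
have nt : `|t| = t := gtr0_norm ht.
rewrite !subrr !subr0 eZ fZ !add0r hEZ // [X in X * _ < _ -> _]nt.
have htN : t * nrm E m x = d / 2.
  by rewrite /t mulrAC -mulf_div divff ?mulr1 // lt0r_neq0.
rewrite htN L00 subr0 (linZ _ gE hl (good_lvl0 gE hx)) hFZ; last exact: hlv.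
rewrite [X in _ -> X * _ < _]nt.
have hd2 : d / 2 < d by lra.
move=> /(_ hd2) H.
rewrite -(ler_pM2l ht).
have -> : t * (2 / d * nrm E m x) = 1.
  rewrite mulrCA htN; field; exact: lt0r_neq0.
exact: ltW.
Qed.

Lemma lvlD (V : lmodType R) (E : scSpace V) m x y : good E -> lvl E m x -> lvl E m y -> lvl E m (x + y).
Proof. by move=> [_ [_ [hL _]]] hx hy; rewrite -[x]scale1r; apply: hL. Qed.
Lemma lvlZ (V : lmodType R) (E : scSpace V) m (a : R) x : good E -> lvl E m x -> lvl E m (a *: x).
Proof. by move=> [h0 [_ [hL _]]] hx; rewrite -[a *: x]addr0; apply: hL. Qed.
Lemma lvlN (V : lmodType R) (E : scSpace V) m x : good E -> lvl E m x -> lvl E m (- x).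
Proof. by move=> gE hx; rewrite -scaleN1r; apply: lvlZ. Qed.
Lemma lvlB (V : lmodType R) (E : scSpace V) m x y : good E -> lvl E m x -> lvl E m y -> lvl E m (x - y).
Proof. by move=> gE hx hy; apply: lvlD => //; apply: lvlN. Qed.

Lemma quad0 k n : quadrant k (0 : 'rV[R]_n).
Proof. by move=> i _; rewrite mxE. Qed.

Lemma contr_id (W : lmodType R) (EW : scSpace W) (k n N : nat)
  (U : nat -> ('rV[R]_n * W)%type -> Prop)
  (g : ('rV[R]_n * W)%type -> ('rV[R]_N * W)%type) L :
  is_scBanach EW ->
  is_germ_nbhd (sc_sum (sc_fin n) EW) (fun p => @quadrant k n p.1) U ->
  sc0 (sc_sum (sc_fin n) EW) (sc_sum (sc_fin N) EW) U g ->
  sc0_contraction EW U (fun p => (g p - g 0).2) ->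
  is_scderiv (sc_sum (sc_fin n) EW) (sc_sum (sc_fin N) EW) U g 0 L ->
  forall w, lvl EW 0 w -> (L (0, w)).2 = w.
Proof.
move=> hB [hUS [hUC [hU0 hUo]]] [hg1 _] [_ [_ hctr]] [[hL0 [hlin [c hc]]] hest].
have gW := good_EW hB.
have gE := good_FS n hB; have gF := good_FS N hB.
have [_ [_ [_ [eWN eWZ]]]] := gW.
have Lz : forall (a : R) x, lvl (sc_sum (sc_fin n) EW) 0 x -> L (a *: x) = a *: L x.
  by move=> a x hx; apply: (linZ _ gE hlin hx).
pose ell w := w - (L (0, w)).2.
have ell0 : forall w, lvl EW 0 w -> lvl EW 0 (ell w).
  move=> w hw; apply: (lvlB gW hw); exact: (proj2 (hL0 (0, w) (conj I hw))).
have stepA : forall w, lvl EW 1 w -> forall r, 0 < r -> r < 1 ->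
    nrm EW 0 (ell w) <= r * (nrm EW 1 w + nrm EW 0 w).
  move=> w hw1 r hr0 hr1.
  have hw0 : lvl EW 0 w := good_lvl0 gW hw1.
  have [d1 [hd1 hd1e]] := hest r hr0.
  have [d2 [hd2 hd2e]] := hctr 0%N r (andb_true_intro (conj hr0 hr1)).
  have [d3 [hd3 hd3e]] := hUo 1%N 0 (hU0 1%N).
  have [d4 [hd4 hd4e]] := hUo 0%N 0 (hU0 0%N).
  set D := Order.min (Order.min d1 d2) (Order.min d3 d4).
  have hD : 0 < D by rewrite !lt_min hd1 hd2 hd3 hd4.
  have hDi : forall z, z < D -> [/\ z < d1, z < d2, z < d3 & z < d4].
    by move=> z; rewrite !lt_min => /andP[/andP[-> ->] /andP[-> ->]].
  set A := nrm EW 1 w + nrm EW 0 w + 1.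
  have hA : 0 < A by have := eWN _ _ hw1; have := eWN _ _ hw0; rewrite /A; lra.
  set t := D / A.
  have ht : 0 < t by rewrite /t divr_gt0.
  have htA : t * A = D by rewrite /t mulfVK // lt0r_neq0.
  have ht1 : t * nrm EW 1 w < D.
    rewrite -htA ltr_pM2l // /A; have := eWN _ _ hw0; lra.
  have ht0 : t * nrm EW 0 w < D.
    rewrite -htA ltr_pM2l // /A; have := eWN _ _ hw1; lra.
  have [h11 h12 h13 h14] := hDi _ ht1.
  have [h01 h02 h03 h04] := hDi _ ht0.
  set h : ('rV[R]_n * W)%type := (0, t *: w).
  have hh1 : lvl (sc_sum (sc_fin n) EW) 1 h by split => //; apply: lvlZ.
  have hh0 : lvl (sc_sum (sc_fin n) EW) 0 h by split => //; apply: lvlZ.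
  have nh1 : nrm (sc_sum (sc_fin n) EW) 1 h = t * nrm EW 1 w.
    by rewrite nrmFS fn0 add0r (EW_Z _ hB hw1) gtr0_norm.
  have nh0 : nrm (sc_sum (sc_fin n) EW) 0 h = t * nrm EW 0 w.
    by rewrite nrmFS fn0 add0r (EW_Z _ hB hw0) gtr0_norm.
  have Uh1 : U 1%N h by apply: hd3e; [exact: quad0 | exact: hh1 | rewrite subr0 nh1].
  have Uh0 : U 0%N h by apply: hd4e; [exact: quad0 | exact: hh0 | rewrite subr0 nh0].
  have := hd1e h hh1; rewrite add0r => /(_ Uh1); rewrite nh1 => /(_ h11) Hd.
  have := hd2e 0 (t *: w) 0 Uh0 (hU0 0%N).
  have f0 : nrm (sc_fin n) 0 0 = 0 := fn0 n.
  have e00 : ((0, 0) : ('rV[R]_n * W)%type) = 0 by [].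
  have w0z : nrm EW 0 (0 : W) = 0 := eWZ 0%N.
  rewrite f0 w0z subr0 (EW_Z _ hB hw0) gtr0_norm // e00 subrr.
  change ((0, t *: w).2) with (t *: w); change ((0 : ('rV[R]_n * W)%type).2) with (0 : W).
  rewrite subrr subr0 -/h => /(_ hd2 h02 hd2) Hc.
  have Lh : L h = t *: L (0, w).
    rewrite -Lz; last by split.
    by congr L; change ((0, t *: w) = (t *: (0 : 'rV[R]_n), t *: w)); rewrite scaler0.
  have hG : lvl (sc_sum (sc_fin N) EW) 0 (g h - g 0).
    by apply: lvlB => //; apply: hg1; [exact: Uh0 | exact: hU0].
  have hLh : lvl (sc_sum (sc_fin N) EW) 0 (L h) by apply: hL0.
  have e1 : t *: ell w = (t *: w - (g h - g 0).2) + ((g h - g 0).2 - (L h).2).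
    rewrite Lh /ell scalerBr; change ((t *: L (0, w)).2) with (t *: (L (0, w)).2).
    by rewrite addrA subrK.
  have hA1 : lvl EW 0 (t *: w - (g h - g 0).2) by apply: lvlB => //; [apply: lvlZ | exact: (proj2 hG)].
  have hA2 : lvl EW 0 ((g h - g 0).2 - (L h).2) by apply: lvlB => //; [exact: (proj2 hG)| exact: (proj2 hLh)].
  have := EW_D hB hA1 hA2; rewrite -e1 (EW_Z _ hB (ell0 _ hw0)) gtr0_norm // => Htri.
  have Hd2 : nrm EW 0 ((g h - g 0).2 - (L h).2) <= r * (t * nrm EW 1 w).
    apply: le_trans Hd; rewrite nrmFS lerDr; exact: fn_ge0.
  have : t * nrm EW 0 (ell w) <= t * (r * (nrm EW 1 w + nrm EW 0 w)) by lra.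
  by rewrite ler_pM2l.
have n0 : forall z, lvl EW 0 z -> nrm EW 0 z <= 0 -> z = 0.
  move=> z hz hle; apply: (EW_eq0 hB hz); apply/le_anti; rewrite hle; exact: eWN.
have stepB : forall w, lvl EW 1 w -> ell w = 0.
  move=> w hw1; have hw0 := good_lvl0 gW hw1.
  apply: n0; first exact: ell0.
  apply: (le0_small (K := nrm EW 1 w + nrm EW 0 w)); last exact: stepA.
  by apply: addr_ge0; apply: eWN.
have ellD : forall w y, lvl EW 0 w -> lvl EW 0 y -> ell w = ell (w - y) + ell y.
  move=> w y hw hy; rewrite /ell.
  have -> : ((0, w) : ('rV[R]_n * W)%type) = 1 *: (0, w - y) + (0, y).
    rewrite scale1r; change (((0 : 'rV[R]_n), w) = (0 + (0 : 'rV[R]_n), w - y + y)); by rewrite addr0 subrK.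
  rewrite hlin; [|by split => //; apply: lvlB|by split].
  rewrite scale1r; change ((L (0, w - y) + L (0, y)).2) with ((L (0, w - y)).2 + (L (0, y)).2).
  by rewrite opprD addrACA subrK.
move=> w hw0.
suff : ell w = 0 by rewrite /ell => /eqP; rewrite subr_eq0 => /eqP <-.
have [_ [_ [_ [_ [_ hdense]]]]] := hB.
apply: n0; first exact: ell0.
apply: (le0_small2 (K := 1 + `|c|)) => d hd.
have [y [hy hwy]] := hdense 0%N w hw0 d hd.
have hwy0 : lvl EW 0 (w - y) by apply: lvlB => //; exact: hy.
rewrite (ellD w y hw0 (hy 0%N)) (stepB y (hy 1%N)) addr0.
have hL1 : lvl EW 0 (L (0, w - y)).2 by exact: (proj2 (hL0 (0, w - y) (conj I hwy0))).
apply: (le_trans (EW_D hB hwy0 (lvlN gW hL1))).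
have nX : nrm (sc_sum (sc_fin n) EW) 0 (0, w - y) = nrm EW 0 (w - y).
  rewrite nrmFS; change (fn (0:'rV[R]_n) + nrm EW 0 (w - y) = nrm EW 0 (w - y)).
  by rewrite fn0 add0r.
have := hc (0, w - y) (conj I hwy0); rewrite nX => Hc.
have : nrm EW 0 (- (L (0, w - y)).2) <= nrm (sc_sum (sc_fin N) EW) 0 (L (0, w - y)).
  rewrite nrmFS -scaleN1r (EW_Z _ hB hL1) normrN normr1 mul1r lerDr; exact: fn_ge0.
move=> H2.
have h1 := ler_norm c; have h2 := normr_ge0 c; have h3 := eWN _ _ hwy0.
move: Hc H2 h1 h2 h3 hwy.
set X := nrm EW 0 (w - y); set B := `|c|; set Y := nrm EW 0 (- _); set Z := nrm _ 0 (L _).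
move=> *; nra.
Qed.

Lemma FS_N W (EW : scSpace W) p m (x : ('rV[R]_p * W)%type) : is_scBanach EW ->
  lvl EW m x.2 -> nrm (sc_sum (sc_fin p) EW) m (- x) = nrm (sc_sum (sc_fin p) EW) m x.
Proof. by move=> hB hx; rewrite -scaleN1r (FS_Z _ hB hx) normrN normr1 mul1r. Qed.

Lemma deriv_unique (W : lmodType R) (EW : scSpace W) (k n N : nat)
  (U : nat -> ('rV[R]_n * W)%type -> Prop)
  (G : ('rV[R]_n * W)%type -> ('rV[R]_N * W)%type) L1 L2 :
  is_scBanach EW ->
  (exists d : R, 0 < d /\ forall y, quadrant k y.1 -> lvl (sc_sum (sc_fin n) EW) 1 y ->
      nrm (sc_sum (sc_fin n) EW) 1 (y - 0) < d -> U 1%N y) ->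
  U 1%N 0 ->
  (forall x, U 1%N x -> lvl (sc_sum (sc_fin N) EW) 0 (G x)) ->
  is_scderiv (sc_sum (sc_fin n) EW) (sc_sum (sc_fin N) EW) U G 0 L1 ->
  is_scderiv (sc_sum (sc_fin n) EW) (sc_sum (sc_fin N) EW) U G 0 L2 ->
  forall x, lvl (sc_sum (sc_fin n) EW) 0 x -> L1 x = L2 x.
Proof.
move=> hB [d3 [hd3 hd3e]] hU10 hGl [[hL10 [hlin1 [c1 hc1]]] hest1] [[hL20 [hlin2 [c2 hc2]]] hest2].
have gW := good_EW hB.
have gE := good_FS n hB; have gF := good_FS N hB.
have [_ [_ [_ [eWN eWZ]]]] := gW.
pose M x := L1 x - L2 x.
have Mlin : forall (a : R) x y, lvl (sc_sum (sc_fin n) EW) 0 x -> lvl (sc_sum (sc_fin n) EW) 0 y ->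
    M (a *: x + y) = a *: M x + M y.
  by move=> a x y hx hy; rewrite /M hlin1 // hlin2 // scalerBr opprD addrACA.
have Ml : forall x, lvl (sc_sum (sc_fin n) EW) 0 x -> lvl (sc_sum (sc_fin N) EW) 0 (M x).
  by move=> x hx; apply: lvlB => //; [apply: hL10|apply: hL20].
have Mb : forall x, lvl (sc_sum (sc_fin n) EW) 0 x ->
    nrm (sc_sum (sc_fin N) EW) 0 (M x) <= (`|c1| + `|c2|) * nrm (sc_sum (sc_fin n) EW) 0 x.
  move=> x hx.
  have hl2 : lvl EW 0 (- L2 x).2 by apply: lvlN => //; exact: (proj2 (hL20 x hx)).
  apply: (le_trans (FS_D hB (proj2 (hL10 x hx)) hl2)).
  rewrite -scaleN1r (FS_Z _ hB (proj2 (hL20 x hx))) normrN normr1 mul1r.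
  have := hc1 x hx; have := hc2 x hx; have := ler_norm c1; have := ler_norm c2.
  have := normr_ge0 c1; have := normr_ge0 c2.
  have := (proj1 (proj2 (proj2 (proj2 gE)))) 0%N x hx.
  set X := nrm _ 0 x; set A1 := nrm _ 0 (L1 x); set A2 := nrm _ 0 (L2 x).
  set B1 := `|c1|; set B2 := `|c2|; move=> *; nra.
have Mz : forall x, lvl (sc_sum (sc_fin N) EW) 0 x -> nrm (sc_sum (sc_fin N) EW) 0 x <= 0 -> x = 0.
  move=> x hx hle; apply: (FS_eq0 hB (proj2 hx)); apply/le_anti; rewrite hle.
  exact: (proj1 (proj2 (proj2 (proj2 gF)))).
have cA : forall h, quadrant k h.1 -> lvl (sc_sum (sc_fin n) EW) 1 h -> M h = 0.
  move=> h hq hh1; have hh0 := good_lvl0 gE hh1.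
  apply: Mz; first exact: Ml.
  set N1 := nrm (sc_sum (sc_fin n) EW) 1 h.
  have hN1 : 0 <= N1 by exact: (proj1 (proj2 (proj2 (proj2 gE)))).
  apply: (le0_small2 (K := 2 * N1)) => r hr.
  have [d1 [hd1 hd1e]] := hest1 r hr.
  have [d2 [hd2 hd2e]] := hest2 r hr.
  set D := Order.min (Order.min d1 d2) d3.
  have hD : 0 < D by rewrite !lt_min hd1 hd2 hd3.
  set t := D / (N1 + 1).
  have ht : 0 < t by rewrite /t divr_gt0 //; lra.
  have htN : t * N1 < D.
    have -> : D = t * (N1 + 1) by rewrite /t mulfVK //; apply: lt0r_neq0; lra.
    rewrite ltr_pM2l //; lra.
  move: htN; rewrite !lt_min => /andP[/andP[ht1 ht2] ht3].
  set h' := t *: h.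
  have hh'1 : lvl (sc_sum (sc_fin n) EW) 1 h' by apply: lvlZ.
  have hh'0 : lvl (sc_sum (sc_fin n) EW) 0 h' by apply: lvlZ.
  have nh' : nrm (sc_sum (sc_fin n) EW) 1 h' = t * N1.
    by rewrite (FS_Z _ hB (proj2 hh1)) gtr0_norm.
  have hq' : quadrant k h'.1.
    move=> i hi; change (0 <= (t *: h.1) ord0 i); rewrite mxE; apply: mulr_ge0; [lra|exact: hq].
  have Uh' : U 1%N h' by apply: hd3e => //; rewrite subr0 nh'.
  have := hd1e h' hh'1; rewrite add0r => /(_ Uh'); rewrite nh' => /(_ ht1) H1.
  have := hd2e h' hh'1; rewrite add0r => /(_ Uh'); rewrite nh' => /(_ ht2) H2.
  have hG : lvl (sc_sum (sc_fin N) EW) 0 (G h' - G 0) by apply: lvlB; [exact: gF| exact: hGl| exact: hGl].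
  have hA1 : lvl (sc_sum (sc_fin N) EW) 0 (G h' - G 0 - L1 h') by apply: lvlB => //; exact: hL10.
  have hA2 : lvl (sc_sum (sc_fin N) EW) 0 (G h' - G 0 - L2 h') by apply: lvlB => //; exact: hL20.
  have eM : M h' = (G h' - G 0 - L2 h') + - (G h' - G 0 - L1 h').
    by rewrite /M; symmetry; rewrite opprB addrC addrA subrK.
  have hMh : M h' = t *: M h by rewrite /M /h' !(linZ _ gE _ hh0) // scalerBr.
  have := FS_D hB (proj2 hA2) (proj2 (lvlN gF hA1)).
  rewrite -eM (FS_N hB (proj2 hA1)) hMh.
  rewrite (FS_Z _ hB (proj2 (Ml _ hh0))) gtr0_norm // => H3.
  have : t * nrm (sc_sum (sc_fin N) EW) 0 (M h) <= t * (2 * N1 * r) by lra.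
  by rewrite ler_pM2l.
have cB : forall w, lvl EW 0 w -> M (0, w) = 0.
  move=> w hw0.
  have [_ [_ [_ [_ [_ hdense]]]]] := hB.
  apply: Mz; first by apply: Ml.
  apply: (le0_small2 (K := `|c1| + `|c2|)) => d hd.
  have [y [hy hwy]] := hdense 0%N w hw0 d hd.
  have hwy0 : lvl EW 0 (w - y) by apply: lvlB => //; exact: hy.
  have -> : ((0, w) : ('rV[R]_n * W)%type) = 1 *: (0, w - y) + (0, y).
    rewrite scale1r; change (((0 : 'rV[R]_n), w) = (0 + (0 : 'rV[R]_n), w - y + y)); by rewrite addr0 subrK.
  rewrite Mlin; [|by split|by split; [|exact: hy]].
  rewrite scale1r (cA (0, y)) ?addr0; [|exact: quad0|by split; [|exact: hy]].
  apply: (le_trans (Mb (0, w - y) (conj I hwy0))).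
  have nX : nrm (sc_sum (sc_fin n) EW) 0 (0, w - y) = nrm EW 0 (w - y).
    rewrite nrmFS; change (fn (0:'rV[R]_n) + nrm EW 0 (w - y) = nrm EW 0 (w - y)).
    by rewrite fn0 add0r.
  rewrite nX; apply: ler_wpM2l; [by apply: addr_ge0 | exact: ltW].
move=> [v w] [_ hw] /=.
set vp : 'rV[R]_n := \row_i ((`|v ord0 i| + v ord0 i) / 2).
set vm : 'rV[R]_n := \row_i ((`|v ord0 i| - v ord0 i) / 2).
have ex : ((v, w) : ('rV[R]_n * W)%type) = 1 *: (vp, 0) + ((-1) *: (vm, 0) + (0, w)).
  change ((v, w) = (1 *: vp + ((-1) *: vm + 0), 1 *: (0 : W) + ((-1) *: (0 : W) + w))).
  rewrite !scaler0 !add0r; congr pair; apply/matrixP => i j; rewrite !mxE [i]ord1.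
  lra.
have hq : forall i, 0 <= (`|v ord0 i| + v ord0 i) / 2 /\ 0 <= (`|v ord0 i| - v ord0 i) / 2.
  move=> i; have := ler_norm (v ord0 i); have := ler_norm (- v ord0 i); rewrite normrN.
  move=> *; split; lra.
have l1 : forall u : 'rV[R]_n, lvl (sc_sum (sc_fin n) EW) 1 (u, 0) by move=> u; split => //; exact: (proj1 gW).
suff : M (v, w) = 0 by rewrite /M => /eqP; rewrite subr_eq0 => /eqP.
rewrite ex Mlin; last 2 first.
- exact: (good_lvl0 gE (l1 _)).
- apply: lvlD; [exact: gE|apply: lvlZ; [exact: gE|exact: (good_lvl0 gE (l1 _))]|by split].
rewrite Mlin; last 2 first.
- exact: (good_lvl0 gE (l1 _)).
- by split.
rewrite (cA (vp, 0)); last 2 first.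
- by move=> i _; rewrite mxE; case: (hq i).
- exact: l1.
rewrite (cA (vm, 0)); last 2 first.
- by move=> i _; rewrite mxE; case: (hq i).
- exact: l1.
by rewrite cB // !scaler0 !addr0.
Qed.

Lemma fst_sum (A B : zmodType) (I : finType) (F : I -> (A * B)%type) : (\sum_i F i).1 = \sum_i (F i).1.
Proof. exact: (big_morph fst (fun x y => erefl) erefl). Qed.
Lemma snd_sum (A B : zmodType) (I : finType) (F : I -> (A * B)%type) : (\sum_i F i).2 = \sum_i (F i).2.
Proof. exact: (big_morph snd (fun x y => erefl) erefl). Qed.

Lemma dim_fst (W : lmodType R) p : has_dim (fun x : ('rV[R]_p * W)%type => x.2 = 0) p.
Proof.
exists (fun i => ('e_i, 0)); split.
  move=> [v w] /=; split.
    move=> ->; exists (fun i => v ord0 i).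
    have e1 : (\sum_(i < p) v ord0 i *: (('e_i, 0) : ('rV[R]_p * W)%type)).1 = v.
      by rewrite fst_sum /= [RHS](row_sum_delta v).
    have e2 : (\sum_(i < p) v ord0 i *: (('e_i, 0) : ('rV[R]_p * W)%type)).2 = 0.
      by rewrite snd_sum big1 // => i _; rewrite /= scaler0.
    by case: (\sum_(i < p) _) e1 e2 => a b /= -> ->.
  move=> [c hc].
  have := congr1 snd hc; rewrite snd_sum big1 //= => i _; by rewrite scaler0.
move=> c hc i.
have := congr1 fst hc; rewrite fst_sum /=.
have -> : \sum_(i0 < p) (c i0 *: (('e_i0, 0) : ('rV[R]_p * W)%type)).1 = \row_j c j.
  by rewrite [RHS]row_sum_delta; apply: eq_bigr => j _; rewrite mxE.
by move/matrixP => /(_ ord0 i); rewrite !mxE.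
Qed.

Lemma lt_all0 (X : R) : (forall e, 0 < e -> X < e) -> X <= 0.
Proof.
move=> h; apply: (le0_small2 (K := 1)) => d hd; rewrite mul1r; exact: ltW (h d hd).
Qed.

Lemma fred (W : lmodType R) (EW : scSpace W) (n N : nat)
  (L : ('rV[R]_n * W)%type -> ('rV[R]_N * W)%type) :
  is_scBanach EW ->
  (forall x, lvl (sc_sum (sc_fin n) EW) 0 x -> L x = (0, x.2)) ->
  sc_fredholm (sc_sum (sc_fin n) EW) (sc_sum (sc_fin N) EW) L n N.
Proof.
move=> hB hL.
have gW := good_EW hB.
have gE := good_FS n hB; have gF := good_FS N hB.
have [w0 [_ [_ [eWN eWZ]]]] := gW.
split.
  split.
    move=> a x y hx hy; rewrite !hL //; last exact: lvlD (lvlZ _ gE hx) hy.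
    change (((0 : 'rV[R]_N), a *: x.2 + y.2) = (a *: 0 + 0, a *: x.2 + y.2)).
    by rewrite scaler0 addr0.
  split.
    move=> m x hx; rewrite hL; last exact: good_lvl0 gE hx.
    by split => //; exact: (proj2 hx).
  move=> m; exists 1 => x hx; rewrite hL; last exact: good_lvl0 gE hx.
  rewrite mul1r !nrmFS fn0 lerD2r; exact: fn_ge0.
exists (fun x => x.2 = 0), (fun x => x.1 = 0 /\ lvl EW 0 x.2),
  (fun y => y.1 = 0 /\ lvl EW 0 y.2), (fun y => y.2 = 0).
have lvl2 : forall p m (x : ('rV[R]_p * W)%type), x.2 = 0 -> lvl (sc_sum (sc_fin p) EW) m x.
  by move=> p m [v w] /= ->; split.
split.
  move=> [v w] /=; split.
    move=> hw; split; first exact: (lvl2 _ _ (v, w) hw).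
    rewrite hL; [by rewrite /= hw | exact: (lvl2 _ _ (v, w) hw)].
  move=> [hx]; rewrite hL // => /(congr1 snd) //.
split; first exact: dim_fst.
split; first exact: dim_fst.
have clo2 : forall p (u : nat -> ('rV[R]_p * W)%type) x, (forall i, (u i).2 = 0) ->
    converges_to (nrm (sc_sum (sc_fin p) EW) 0) u x -> lvl EW 0 x.2 -> x.2 = 0.
  move=> p u [v w] hu hc /= hw.
  have hN : lvl EW 0 (- w) by apply: lvlN.
  suff : - w = 0 by move/eqP; rewrite oppr_eq0 => /eqP.
  apply: (EW_eq0 hB hN); apply/le_anti; rewrite eWN // andbT.
  apply: lt_all0 => e he; have [i0 hi0] := hc e he.
  apply: le_lt_trans (hi0 i0 (leqnn _)).
  rewrite nrmFS; change ((u i0 - (v, w)).2) with ((u i0).2 - w); rewrite hu sub0r lerDr.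
  exact: fn_ge0.
have clo1 : forall p (u : nat -> ('rV[R]_p * W)%type) x, (forall i, (u i).1 = 0 /\ lvl EW 0 (u i).2) ->
    converges_to (nrm (sc_sum (sc_fin p) EW) 0) u x -> lvl EW 0 x.2 -> x.1 = 0.
  move=> p u [v w] hu hc /= hw.
  apply: fn_eq0; apply/le_anti; rewrite fn_ge0 andbT.
  apply: lt_all0 => e he; have [i0 hi0] := hc e he.
  apply: le_lt_trans (hi0 i0 (leqnn _)).
  rewrite nrmFS; change ((u i0 - (v, w)).1) with ((u i0).1 - v); rewrite (proj1 (hu i0)) sub0r fnN lerDl.
  apply: eWN; apply: lvlB => //; exact: (proj2 (hu i0)).
have subK : forall p, is_subspace (fun x : ('rV[R]_p * W)%type => x.2 = 0).
  move=> p; split => // a x y hx hy.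
  by change (a *: x.2 + y.2 = 0); rewrite hx hy scaler0 addr0.
have subX : forall p, is_subspace (fun x : ('rV[R]_p * W)%type => x.1 = 0 /\ lvl EW 0 x.2).
  move=> p; split; first by split => //; exact: w0.
  move=> a x y [hx1 hx2] [hy1 hy2]; split.
    by change (a *: x.1 + y.1 = 0); rewrite hx1 hy1 scaler0 addr0.
  exact: lvlD (lvlZ _ gW hx2) hy2.
split.
  split; first exact: subK.
  split; first exact: subX.
  split; first by move=> x hx; exact: lvl2.
  split; first by move=> x [_ h]; split.
  split; first by move=> u x hu hx hc; exact: clo2 u x hu hc (proj2 hx).
  split; first by move=> u x hu hx hc; split; [exact: clo1 u x hu hc (proj2 hx)| exact: (proj2 hx)].
  split; first by move=> [v w] /= hw [hv _]; rewrite hv hw.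
  split.
    move=> m [v w] [_ hw]; exists (v, 0), (0, w); split => //.
    split; first by split => //; exact: good_lvl0 gW hw.
    split; first by split => //; exact: w0.
    split; first by split.
    change ((v, w) = (v + 0, 0 + w)); by rewrite addr0 add0r.
  move=> m; exists 1 => [[a1 a2] [b1 b2]] ha [hb _] _ [_ hb2].
  change (a2 = 0) in ha; change (b1 = 0) in hb; change (lvl EW m b2) in hb2.
  subst a2 b1; rewrite !nrmFS.
  change (fn a1 + nrm EW m 0 <= 1 * (fn (a1 + 0) + nrm EW m (0 + b2))).
  by rewrite addr0 add0r eWZ addr0 mul1r lerDl; exact: eWN.
split.
  split; first exact: subX.
  split; first exact: subK.
  split; first by move=> x [_ h]; split.
  split; first by move=> x hx; exact: lvl2.
  split; first by move=> u x hu hx hc; split; [exact: clo1 u x hu hc (proj2 hx)| exact: (proj2 hx)].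
  split; first by move=> u x hu hx hc; exact: clo2 u x hu hc (proj2 hx).
  split; first by move=> [v w] /= [hv _] hw; rewrite hv hw.
  split.
    move=> m [v w] [_ hw]; exists (0, w), (v, 0); split.
      by split => //; exact: good_lvl0 gW hw.
    split => //.
    split; first by split.
    split; first by split => //; exact: w0.
    change ((v, w) = (0 + v, w + 0)); by rewrite addr0 add0r.
  move=> m; exists 1 => [[a1 a2] [b1 b2]] [ha _] hb [_ ha2] _.
  change (a1 = 0) in ha; change (b2 = 0) in hb; change (lvl EW m a2) in ha2.
  subst a1 b2; rewrite !nrmFS.
  change (fn (0 : 'rV[R]_N) + nrm EW m a2 <= 1 * (fn (0 + b1) + nrm EW m (a2 + 0))).
  by rewrite addr0 add0r fn0 add0r mul1r lerDr; exact: fn_ge0.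
split.
  move=> [v w]; split.
    move=> [hv hw]; exists (0, w); split; first by split.
    rewrite hL; last by split.
    by change (v = 0) in hv; rewrite hv.
  move=> [x [[hx1 hx2] ->]]; rewrite hL; last by split.
  by split.
split.
  move=> [v w] [v' w'] [hv hw] [hv' hw'] .
  change (v = 0) in hv; change (v' = 0) in hv'; subst v v'.
  rewrite !hL; [|by split|by split].
  by move=> /(congr1 snd) /= ->.
split.
  move=> m [v w] [hv _] [_ hw]; exists (0, w); split.
    by split => //; exact: good_lvl0 gW hw.
  split; first by split.
  rewrite hL; last by split => //; exact: good_lvl0 gW hw.
  by change (v = 0) in hv; rewrite hv.
move=> m; exists 1 => [[v w]] [hv _] hx.
change (v = 0) in hv; subst v.
rewrite hL; last exact: good_lvl0 gE hx.
rewrite mul1r !nrmFS; change (fn (0 : 'rV[R]_n) + nrm EW m w <= fn (0 : 'rV[R]_N) + nrm EW m w); by rewrite !fn0.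
Qed.

Theorem proposition3p5 (W : lmodType R) (EW : scSpace W) (k n N : nat)
  (U : nat -> ('rV[R]_n * W)%type -> Prop)
  (g : ('rV[R]_n * W)%type -> ('rV[R]_N * W)%type) :
  is_scBanach EW ->
  (k <= n)%N ->
  is_germ_nbhd (sc_sum (sc_fin n) EW) (fun p => @quadrant k n p.1) U ->
  sc_smooth (sc_sum (sc_fin n) EW) (sc_sum (sc_fin N) EW) U g ->
  sc0_contraction EW U (fun p => (g p - g 0).2) ->
  lin_fredholm_index (sc_sum (sc_fin n) EW) (sc_sum (sc_fin N) EW)
    (fun p => @quadrant k n p.1) U g (n%:Z - N%:Z).
Proof.
move=> hB hk hG hsm hC.
have gW := good_EW hB.
have gE := good_FS n hB; have gF := good_FS N hB.
have [w0 [_ [_ [eWN eWZ]]]] := gW.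
have hG' := hG; move: hG' => [hUS [hUC [hU0 hUo]]].
have [hsc0 [L0 [hder htan]]] := hsm 1%N.
set D0 := L0 0.
have hD0 : is_scderiv (sc_sum (sc_fin n) EW) (sc_sum (sc_fin N) EW) U g 0 D0 := hder 0 (hU0 1%N).
have [[hD0l [hD0lin _]] hD0e] := hD0.
have cid := contr_id hB hG hsc0 hC hD0.
have LB : forall m, (forall x, lvl (sc_sum (sc_fin n) EW) m x -> lvl (sc_sum (sc_fin N) EW) m (D0 x)) /\
    exists c, forall x, lvl (sc_sum (sc_fin n) EW) m x ->
      nrm (sc_sum (sc_fin N) EW) m (D0 x) <= c * nrm (sc_sum (sc_fin n) EW) m x.
  apply: (Lbound gE gF hU0 hD0lin _ _ _ htan).
  - move=> m x hx; exact: (FS_eq0 hB (proj2 hx)).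
  - move=> m a y hy; exact: (FS_Z _ hB (proj2 hy)).
  - move=> m a x hx; exact: (FS_Z _ hB (proj2 hx)).
pose T (x : ('rV[R]_n * W)%type) : ('rV[R]_N * W)%type := D0 (x.1, 0) + ((D0 (0, x.2)).1, 0).
pose s x := g 0 + T x.
have lv0 : forall j (v : 'rV[R]_n), lvl (sc_sum (sc_fin n) EW) j (v, 0) by move=> j v; split => //; exact: w0.
have Tl : forall j x, lvl (sc_sum (sc_fin N) EW) j (T x).
  move=> j x; apply: lvlD; [exact: gF| apply: (proj1 (LB j)); exact: lv0|].
  exact: (conj I (w0 j)).
have T0 : T 0 = 0.
  rewrite /T; change (D0 0 + ((D0 0).1, 0) = 0).
  by rewrite (lin0 gE hD0lin) addr0.
have Tlin : forall (a : R) x y, lvl (sc_sum (sc_fin n) EW) 0 x -> lvl (sc_sum (sc_fin n) EW) 0 y ->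
    T (a *: x + y) = a *: T x + T y.
  move=> a [x1 x2] [y1 y2] [_ hx] [_ hy]; rewrite /T.
  change ((D0 (a *: x1 + y1, 0) + ((D0 (0, a *: x2 + y2)).1, 0)) =
     a *: (D0 (x1, 0) + ((D0 (0, x2)).1, 0)) + (D0 (y1, 0) + ((D0 (0, y2)).1, 0))).
  have -> : ((a *: x1 + y1, 0) : ('rV[R]_n * W)%type) = a *: (x1, 0) + (y1, 0).
    by change ((a *: x1 + y1, 0) = (a *: x1 + y1, a *: (0 : W) + 0)); rewrite scaler0 addr0.
  have -> : ((0, a *: x2 + y2) : ('rV[R]_n * W)%type) = a *: (0, x2) + (0, y2).
    by change ((0, a *: x2 + y2) = (a *: (0 : 'rV[R]_n) + 0, a *: x2 + y2)); rewrite scaler0 addr0.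
  rewrite (hD0lin a (x1, 0) (y1, 0) (lv0 0%N x1) (lv0 0%N y1)).
  rewrite (hD0lin a (0, x2) (0, y2) (conj I hx) (conj I hy)).
  have -> : (((a *: D0 (0, x2) + D0 (0, y2)).1, 0) : ('rV[R]_N * W)%type) =
      a *: ((D0 (0, x2)).1, 0) + ((D0 (0, y2)).1, 0).
    by change ((a *: (D0 (0, x2)).1 + (D0 (0, y2)).1, 0) = (a *: (D0 (0, x2)).1 + (D0 (0, y2)).1, a *: (0 : W) + 0)); rewrite scaler0 addr0.
  by rewrite scalerDr addrACA.
have Tb : forall j m, exists b, forall x, lvl (sc_sum (sc_fin n) EW) m x ->
    nrm (sc_sum (sc_fin N) EW) j (T x) <= b * nrm (sc_sum (sc_fin n) EW) m x.
  move=> j m; have [hlj [cj hcj]] := LB j; have [hlm [cm hcm]] := LB m.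
  exists (`|cj| + `|cm|) => [[v w]] [_ hw].
  rewrite /T; change ((v, w).1) with v; change ((v, w).2) with w.
  have h1 := hlj _ (lv0 j v).
  have h2 := hlm _ (conj I hw : lvl (sc_sum (sc_fin n) EW) m (0, w)).
  apply: (le_trans (@FS_D _ EW N j (D0 (v, 0)) ((D0 (0, w)).1, 0) hB (proj2 h1) (w0 j))).
  have e1 : nrm (sc_sum (sc_fin n) EW) j (v, 0) = fn v by rewrite nrmFS /= eWZ addr0.
  have e2 : nrm (sc_sum (sc_fin N) EW) j ((D0 (0, w)).1, 0) = fn (D0 (0, w)).1 by rewrite nrmFS /= eWZ addr0.
  have e3 : nrm (sc_sum (sc_fin n) EW) m (0, w) = nrm EW m w.
    rewrite nrmFS; change (fn (0 : 'rV[R]_n) + nrm EW m w = nrm EW m w); by rewrite fn0 add0r.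
  have i1 := hcj _ (lv0 j v); rewrite e1 in i1.
  have i2 := hcm _ (conj I hw : lvl (sc_sum (sc_fin n) EW) m (0, w)); rewrite e3 in i2.
  have i3 : fn (D0 (0, w)).1 <= nrm (sc_sum (sc_fin N) EW) m (D0 (0, w)).
    rewrite nrmFS lerDl; exact: eWN (proj2 h2).
  rewrite e2 (@nrmFS _ EW n m (v, w)).
  change (nrm (sc_sum (sc_fin N) EW) j (D0 (v, 0)) + fn (D0 (0, w)).1 <=
     (`|cj| + `|cm|) * (fn v + nrm EW m w)).
  have := ler_norm cj; have := ler_norm cm; have := normr_ge0 cj; have := normr_ge0 cm.
  have := fn_ge0 v; have := eWN _ _ hw.
  move: i1 i2 i3.
  set A1 := nrm _ j (D0 _); set A2 := fn (D0 _).1; set A3 := nrm _ m (D0 _).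
  set X1 := fn v; set X2 := nrm EW m w; set B1 := `|cj|; set B2 := `|cm|.
  move=> *; nra.
pose Dd (x : ('rV[R]_n * W)%type) : ('rV[R]_N * W)%type := (0, x.2).
have TD : forall x, lvl (sc_sum (sc_fin n) EW) 0 x -> T x + Dd x = D0 x.
  move=> [v w] [_ hw]; rewrite /T /Dd -addrA.
  change (D0 (v, 0) + ((D0 (0, w)).1 + 0, 0 + w) = D0 (v, w)).
  rewrite addr0 add0r.
  have -> : (((D0 (0, w)).1, w) : ('rV[R]_N * W)%type) = D0 (0, w).
    by rewrite -{2}(cid w hw); case: (D0 (0, w)).
  have := hD0lin 1 (v, 0) (0, w) (lv0 0%N v) (conj I hw).
  rewrite !scale1r => <-.
  by congr D0; change ((v + 0, 0 + w) = (v, w)); rewrite addr0 add0r.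
have s0 : s 0 = g 0 by rewrite /s T0 addr0.
have gl : forall m, lvl (sc_sum (sc_fin N) EW) m (g 0) := fun m => hsc0.1 m 0 (hU0 m).
exists U, s; split; first exact: hG.
split.
  split.
    move=> kk; apply: (affine_scK kk gE gF (c := g 0) (T := T)) => //;
      try (by move=> m x hx; exact: (proj2 (hUC m x hx))); try (by move=> m x _; apply: Tl);
      try (by move=> m; apply: Tb).
  split.
    by move=> m x _; rewrite /s; apply: lvlD => //; apply: Tl.
  move=> kk; apply: (affine_scK kk gE (good_shift gF) (c := g 0) (T := T)) => //;
    try (by move=> m; exact: gl); 
    try (by move=> m x hx; exact: (proj2 (hUC m x hx))); try (by move=> m x _; apply: Tl);
    try (by move=> m; apply: Tb).
split; first exact: s0.
have hDd : is_scderiv (sc_sum (sc_fin n) EW) (sc_sum (sc_fin N) EW)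
    (fun m x => U m x /\ U m x) (fun x => g x - s x) 0 Dd.
  split.
    split; first by move=> x [_ hx]; exact: (conj I hx).
    split.
      move=> a x y _ _; rewrite /Dd.
      change ((0, a *: x.2 + y.2) = (a *: (0 : 'rV[R]_N) + 0, a *: x.2 + y.2)).
      by rewrite scaler0 addr0.
    exists 1 => x [_ hx]; rewrite /Dd mul1r !nrmFS.
    change (fn (0 : 'rV[R]_N) + nrm EW 0 x.2 <= fn x.1 + nrm EW 0 x.2).
    by rewrite fn0 lerD2r fn_ge0.
  move=> e he; have [d [hd hde]] := hD0e e he; exists d; split => // h hh1 [hU1 _] hnd.
  have := hde h hh1 hU1 hnd; rewrite !add0r.
  have hh0 : lvl (sc_sum (sc_fin n) EW) 0 h := good_lvl0 gE hh1.
  have eq : forall z : ('rV[R]_n * W)%type, z = 0 -> g h - s h - (g z - s z) - Dd h = g h - g 0 - D0 h.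
    move=> z ->; rewrite s0 subrr subr0 /s -(TD h hh0).
    by rewrite !opprD !addrA.
  by rewrite eq.
split; first by exists Dd.
move=> L hL; exists n, N; split; last by [].
apply: fred => // x hx.
apply: (deriv_unique (k := k) hB _ (conj (hU0 1%N) (hU0 1%N)) _ hL hDd hx).
  have [d3 [hd3 hd3e]] := hUo 1%N 0 (hU0 1%N).
  by exists d3; split => // y hq hy hn; split; apply: hd3e.
move=> x0 [hx0 _]; apply: lvlB => //; first exact: (hsc0.1 0%N x0 (hUS 0%N x0 hx0)).
rewrite /s; apply: lvlD => //; apply: Tl.
Qed.
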